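(* Let $A\subset\omega$ be co-infinite and let $u_0,\dots,u_n\in\mathcal M$ be such that $\bigcup_{k=0}^nu_k(A)$ is co-infinite. Then there exists $\chi\in\mathcal M_A$ such that $\bigcup_{k=0}^n\mathrm{im}(u_k\chi)$ is co-infinite.
   Context: $\omega=\{1,2,\dots\}$, $\mathcal M$ the monoid of injections $\omega\to\omega$, and $\mathcal M_A$ the submonoid of injections fixing $A\subset\omega$ elementwise. A subset of $\omega$ is co-infinite if its complement in $\omega$ is infinite. *)

(* Defs.v *)
From mathcomp Require Import all_boot.
From mathcomp Require Import boolp classical_sets cardinality.
Set Implicit Arguments. Unset Strict Implicit. Unset Printing Implicit Defensive.
Local Open Scope classical_set_scope.

(* omega is modelled by nat (a relabelling n |-> n+1 of {1,2,...}). *)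

Definition inM (u : nat -> nat) : Prop := injective u.

Definition inMA (A : set nat) (chi : nat -> nat) : Prop :=
  injective chi /\ (forall a, A a -> chi a = a).

Definition coinfinite (S : set nat) : Prop := infinite_set (~` S).

(* Main.v *)
Require Import Defs.
From mathcomp Require Import all_boot.
From mathcomp Require Import boolp classical_sets cardinality.
Local Open Scope classical_set_scope.

Lemma big_elt (M : nat) (S : set nat) : infinite_set S -> exists x, S x /\ (M < x)%N.
Proof.
move=> SI; apply: contrapT => H; apply: SI.
apply: (@sub_finite_set _ _ `I_M.+1); last exact: finite_II.
move=> x Sx /=; rewrite ltnS; case: (leqP x M) => // Mx.
by exfalso; apply: H; exists x.
Qed.

Lemma bound_ex (g : nat -> nat) n : exists B, forall k, (k <= n)%N -> (g k <= B)%N.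
Proof.
elim: n => [|n [B HB]]; first by exists (g 0) => k; rewrite leqn0 => /eqP->.
exists (maxn B (g n.+1)) => k; rewrite leq_eqVlt => /orP[/eqP->|kn].
  by rewrite leq_maxr.
by rewrite (leq_trans (HB k kn)) // leq_maxl.
Qed.

Lemma step (E C : set nat) (n : nat) (u : nat -> nat -> nat) :
  infinite_set E -> infinite_set C -> (forall k, (k <= n)%N -> injective (u k)) ->
  forall M, exists t : nat * nat * nat,
    [/\ E t.1.1, (M < t.1.1)%N, C t.1.2, (t.1.1 < t.1.2)%N &
    [/\ (forall k, (k <= n)%N -> t.1.1 < u k t.1.2)%N, (t.1.1 <= t.2)%N,
        (t.1.2 <= t.2)%N & (forall k, (k <= n)%N -> u k t.1.2 <= t.2)%N]].
Proof.
move=> EI CI uI M.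
have [e [Ee Me]] := @big_elt M _ EI.
pose Bad := `I_e.+1 `|` \bigcup_(k in [set k | (k <= n)%N]) (u k @^-1` `I_e.+1).
have Bf : finite_set Bad.
  rewrite finite_setU; split; first exact: finite_II.
  apply: bigcup_finite.
    apply: (@sub_finite_set _ _ `I_n.+1); last exact: finite_II.
    by move=> k /=; rewrite ltnS.
  move=> k kn; apply: finite_preimage; last exact: finite_II.
  by move=> x y _ _; apply: uI.
have [d [[Cd nBd] _]] := @big_elt 0 _ (infinite_setD CI Bf).
have ed : (e < d)%N.
  by rewrite ltnNge; apply/negP => de; apply: nBd; left => /=; rewrite ltnS.
have eu : forall k, (k <= n)%N -> (e < u k d)%N.
  move=> k kn; rewrite ltnNge; apply/negP => de; apply: nBd; right; exists k => //=.
have [B HB] := bound_ex (fun k => u k d) n.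
exists (e, d, maxn e (maxn d B)); split => //=; split => //.
- exact: leq_maxl.
- by rewrite (leq_trans _ (leq_maxr _ _)) // leq_maxl.
- by move=> k kn; rewrite (leq_trans (HB k kn)) // (leq_trans _ (leq_maxr _ _)) // leq_maxr.
Qed.

Lemma incr_lt (f : nat -> nat) : (forall i, f i < f i.+1)%N -> forall i j, (i < j)%N -> (f i < f j)%N.
Proof.
move=> H i j; elim: j => // j IH; rewrite ltnS leq_eqVlt => /orP[/eqP->|ij] //.
exact: ltn_trans (IH ij) (H j).
Qed.

Lemma incr_inj (f : nat -> nat) : (forall i, f i < f i.+1)%N -> injective f.
Proof.
move=> H i j fij; case: (ltngtP i j) => // ij.
  by have := @incr_lt f H _ _ ij; rewrite fij ltnn.
by have := @incr_lt f H _ _ ij; rewrite fij ltnn.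
Qed.

Theorem proposition2p7 (A : set nat) (n : nat) (u : nat -> nat -> nat) :
  coinfinite A ->
  (forall k, (k <= n)%N -> inM (u k)) ->
  coinfinite (\bigcup_(k in [set k | (k <= n)%N]) (u k @` A)) ->
  exists chi : nat -> nat, inMA A chi /\
    coinfinite (\bigcup_(k in [set k | (k <= n)%N]) range (u k \o chi)).
Proof.
rewrite /coinfinite /inM => CI uI EI.
have [f hf] := choice (@step _ _ n u EI CI uI).
pose st := fix st i := if i is i'.+1 then f (st i').2 else f 0.
pose e i := (st i).1.1. pose d i := (st i).1.2. pose M i := (st i).2.
have H0 : forall i, exists Mp, [/\ (~` \bigcup_(k in [set k | (k <= n)%N]) (u k @` A)) (e i),
     (Mp < e i)%N, (~` A) (d i), (e i < d i)%N &
    [/\ (forall k, (k <= n)%N -> e i < u k (d i))%N, (e i <= M i)%N,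
        (d i <= M i)%N & (forall k, (k <= n)%N -> u k (d i) <= M i)%N]].
  by case=> [|i]; [exists 0; apply: hf | exists (M i); apply: hf].
have Hs : forall i, (M i < e i.+1)%N by move=> i; have [] := hf (M i).
have eM i : (e i <= M i)%N by have [? [_ _ _ _ []]] := H0 i.
have einc : forall i, (e i < e i.+1)%N by move=> i; exact: leq_ltn_trans (eM i) (Hs i).
have Minc : forall i, (M i < M i.+1)%N.
  by move=> i; apply: (leq_trans (Hs i)); apply: eM.
have key : forall i j k, (k <= n)%N -> e j <> u k (d i).
  move=> i j k kn; case: (ltnP i j) => ij.
  - have [? [_ _ _ _ [_ _ _ Hu]]] := H0 i.
    have : (M i < e j)%N.
      case: j ij => // j; rewrite ltnS => ij.
      apply: leq_ltn_trans (Hs j).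
      rewrite leq_eqVlt in ij; case/orP: ij => [/eqP->//|ij].
      exact: ltnW (@incr_lt M Minc _ _ ij).
    move=> Mj eq; move: (Hu k kn); rewrite -eq => /(leq_ltn_trans)/(_ Mj).
    by rewrite ltnn.
  - have [? [_ _ _ _ [Hu _ _ _]]] := H0 i.
    have : (e j <= e i)%N.
      rewrite leq_eqVlt in ij; case/orP: ij => [/eqP->//|ij].
      exact: ltnW (@incr_lt e einc _ _ ij).
    move=> ej eq; move: (Hu k kn); rewrite -eq => lt.
    by have := leq_trans lt ej; rewrite ltnn.
have dinc : forall i, (d i < d i.+1)%N.
  move=> i; have [? [_ _ _ _ [_ _ dM _]]] := H0 i.
  have [? [_ _ _ ed _]] := H0 i.+1.
  exact: leq_ltn_trans dM (ltn_trans (Hs i) ed).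
pose chi x := if `[< A x >] then x else d x.
exists chi; split.
  split; last by move=> a Aa; rewrite /chi; case: asboolP.
  move=> x y; rewrite /chi; case: asboolP => Ax; case: asboolP => Ay.
  - by [].
  - by move=> xd; have [? [_ _ Cd _ _]] := H0 y; exfalso; apply: Cd; rewrite -xd.
  - by move=> xd; have [? [_ _ Cd _ _]] := H0 x; exfalso; apply: Cd; rewrite xd.
  - by move=> h; apply: (@incr_inj d dinc x y h).
move=> Fin; apply: infinite_nat.
have -> : [set: nat] = e @^-1` (~` \bigcup_(k in [set k | (k <= n)%N]) range (u k \o chi)).
  apply/seteqP; split => // j _ /= [k kn [x _ /=]].
  rewrite /chi; case: asboolP => Ax eq.
  - have [? [Ej _ _ _ _]] := H0 j; apply: Ej; exists k => //; exists x => //.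
  - exact: (key x j k kn (esym eq)).
apply: finite_preimage => //.
by move=> x y _ _ h; apply: (@incr_inj e einc x y h).
Qed.
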